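(* Consider the fifth-order WENO reconstruction of the numerical flux $\hat f_{i\pm\frac12}=\sum_{m=0}^{2}\omega_{m,i\pm\frac12}\hat f^m_{i\pm\frac12}$ on a uniform grid $x_i=x_0+i\Delta x$, for a smooth function $f$. Use the WENO-Z weights with $\epsilon=0$, $$\omega_{m}=\frac{\alpha_m}{\sum_{l=0}^2\alpha_l},\qquad \alpha_m=d_m\Bigl[1+\Bigl(\frac{\tau_5}{\beta^{DS}_{m}}\Bigr)^2\Bigr],\qquad (d_0,d_1,d_2)=\Bigl(\tfrac1{10},\tfrac6{10},\tfrac3{10}\Bigr),$$ where the modified smoothness indicators are $\beta^{DS}_{m,i\pm\frac12}=\beta_{m,i\pm\frac12}(\delta_{m,i}+C)$ and $\tau_5=|\beta_0-\beta_2|$. Assume the multipliers satisfy $\delta_{1,i}=\Phi(\bar x_i)$ and $\delta_{0,i}=\Phi(\bar x_i)+O(\Delta x)$, $\delta_{2,i}=\Phi(\bar x_i)+O(\Delta x)$ for some function $\Phi$ of the stencil $\bar x_i=(x_{i-k},\dots,x_{i+k})$, and that the constant $C$ is chosen so that $P(\bar x_i):=\Phi(\bar x_i)+C>\kappa>0$ for a fixed $\kappa$ (with $P=O(1)$). Then at non-critical points, i.e. where $f_x\neq 0$, $$\omega^{DS}_{m,i\pm\frac12}=d_m+O(\Delta x^6),\qquad m=0,1,2,$$ so in particular the sufficient condition $\omega_m^{\pm}-d_m=O(\Delta x^3)$ for fifth-order accuracy holds and the resulting WENO-Z scheme with the modified smoothness indicators is fifth-order accurate there.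
   Context: Fifth-order WENO: on the stencil $\{x_{i-2},\dots,x_{i+2}\}$, with $f_j=f(u(x_j))$, the candidate fluxes are $\hat f^0_{i+\frac12}=\frac{2f_{i-2}-7f_{i-1}+11f_i}{6}$, $\hat f^1_{i+\frac12}=\frac{-f_{i-1}+5f_i+2f_{i+1}}{6}$, $\hat f^2_{i+\frac12}=\frac{2f_i+5f_{i+1}-f_{i+2}}{6}$ (the $i-\frac12$ versions by shifting all indices by $-1$). The Jiang–Shu smoothness indicators for $\hat f_{i+\frac12}$ are $\beta_0=\frac{13}{12}(f_{i-2}-2f_{i-1}+f_i)^2+\frac14(f_{i-2}-4f_{i-1}+3f_i)^2$, $\beta_1=\frac{13}{12}(f_{i-1}-2f_i+f_{i+1})^2+\frac14(-f_{i-1}+f_{i+1})^2$, $\beta_2=\frac{13}{12}(f_i-2f_{i+1}+f_{i+2})^2+\frac14(3f_i-4f_{i+1}+f_{i+2})^2$; those for $\hat f_{i-\frac12}$ are obtained by index shift $-1$. For smooth $f$ these satisfy $\beta_m=f_x^2\Delta x^2+O(\Delta x^4)$ and $\tau_5=|\beta_0-\beta_2|=\frac{13}{3}|f_{xx}f_{xxx}|\Delta x^5+O(\Delta x^6)$. The same multiplier $\delta_{m,i}$ (depending only on the global stencil position $i$) is used for both $\beta_{m,i+\frac12}$ and $\beta_{m,i-\frac12}$; in the paper $\delta_{m,i}$ are outputs of a convolutional neural network with differentiable activations and receptive field of size $2k+1$, and $\delta_{0,i+1}=\delta_{1,i}=\delta_{2,i-1}$. *)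

(* Defs.v *)
From Stdlib Require Import Reals Lra ZArith.
From Coquelicot Require Import Coquelicot.
Open Scope R_scope.

Definition bigO0 (g : R -> R) (k : nat) : Prop :=
  exists K eps : R, 0 < eps /\
    forall h : R, 0 < h < eps -> Rabs (g h) <= K * h ^ k.

Definition dlin (m : nat) : R :=
  match m with 0%nat => 1/10 | 1%nat => 6/10 | _ => 3/10 end.

(* v j = f_{i+j} (values on the stencil relative to position i);
   Jiang--Shu indicators for the flux at i+1/2 *)
Definition betaJS (m : nat) (v : Z -> R) : R :=
  match m with
  | 0%nat => 13/12 * (v (-2)%Z - 2 * v (-1)%Z + v 0%Z) ^ 2
             + 1/4 * (v (-2)%Z - 4 * v (-1)%Z + 3 * v 0%Z) ^ 2
  | 1%nat => 13/12 * (v (-1)%Z - 2 * v 0%Z + v 1%Z) ^ 2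
             + 1/4 * (- v (-1)%Z + v 1%Z) ^ 2
  | _ => 13/12 * (v 0%Z - 2 * v 1%Z + v 2%Z) ^ 2
             + 1/4 * (3 * v 0%Z - 4 * v 1%Z + v 2%Z) ^ 2
  end.

Definition tau5 (v : Z -> R) : R := Rabs (betaJS 0 v - betaJS 2 v).

(* WENO-Z (epsilon = 0) with modified indicators beta^DS_m = beta_m * s m,
   where s m = delta_m + C *)
Definition alphaDS (v : Z -> R) (s : nat -> R) (m : nat) : R :=
  dlin m * (1 + (tau5 v / (betaJS m v * s m)) ^ 2).

Definition omegaDS (v : Z -> R) (s : nat -> R) (m : nat) : R :=
  alphaDS v s m / (alphaDS v s 0 + alphaDS v s 1 + alphaDS v s 2).

(* stencil values around grid point x_i = x with spacing h:
   for i+1/2 : f_{i+j} = f(x + j h);  for i-1/2 : shifted by -1 *)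
Definition stencil_plus (f : R -> R) (x h : R) : Z -> R :=
  fun j => f (x + IZR j * h).
Definition stencil_minus (f : R -> R) (x h : R) : Z -> R :=
  fun j => f (x + IZR (j - 1) * h).

(* Main.v *)
Require Import Defs.
From Stdlib Require Import Reals Lra Lia ZArith.
From Coquelicot Require Import Coquelicot.
Open Scope R_scope.

Definition Tay (f : R -> R) (x : R) (n : nat) (t : R) : R :=
  sum_f_R0 (fun m => t ^ m / INR (Factorial.fact m) * Derive_n f m x) n.

Lemma deriv_cont f (fs : forall (n : nat) (y : R), ex_derive_n f n y) k y :
  continuity_pt (Derive_n f k) y.
Proof.
  apply continuity_pt_filterlim.
  apply (ex_derive_continuous (Derive_n f k)). exact (fs (S k) y).
Qed.

Lemma bound_on f (fs : forall (n : nat) (y : R), ex_derive_n f n y) k x :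
  exists M, 0 <= M /\ forall y, x - 3 <= y <= x + 3 -> Rabs (Derive_n f k y) <= M.
Proof.
  destruct (continuity_ab_maj (fun y => Rabs (Derive_n f k y)) (x-3) (x+3))
    as [Mx [HM _]].
  - lra.
  - intros c _. exact (continuity_pt_comp (Derive_n f k) Rabs c
                         (deriv_cont f fs k c) (Rcontinuity_abs _)).
  - exists (Rabs (Derive_n f k Mx)). split; [apply Rabs_pos | exact HM].
Qed.

Lemma Tay0 f x n : Tay f x n 0 = f x.
Proof.
  unfold Tay. induction n as [|n IH].
  - simpl. field.
  - cbn [sum_f_R0]. rewrite IH. cbn [pow]. unfold Rdiv. rewrite !Rmult_0_l. apply Rplus_0_r.
Qed.

Lemma taylor_rem f (fs : forall (n : nat) (y : R), ex_derive_n f n y) x n :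
  exists M, 0 <= M /\ forall t, Rabs t <= 3 ->
    Rabs (f (x + t) - Tay f x n t) <= M * Rabs t ^ S n.
Proof.
  destruct (bound_on f fs (S n) x) as [Mb [HMb HB]].
  pose proof (INR_fact_lt_0 (S n)) as HF.
  exists (Mb / INR (Factorial.fact (S n))). split.
  { apply Rmult_le_pos; [lra|]. apply Rlt_le, Rinv_0_lt_compat; lra. }
  intros t Ht.
  destruct (Rtotal_order t 0) as [Hlt|[Heq|Hgt]].
  -
    set (g := fun y => f (- y)).
    assert (Hl : forall N s, locally s (fun y : R => forall k, (k <= N)%nat -> ex_derive_n f k y)).
    { intros N s. apply filter_forall. intros; apply fs. }
    destruct (Taylor_Lagrange g n (- x) (- x - t)) as [z [Hz Heqz]].
    { lra. }
    { intros s _ k _. apply ex_derive_n_comp_opp. apply Hl. }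
    assert (Hg : g (- x - t) = f (x + t)).
    { unfold g. f_equal. ring. }
    rewrite Hg in Heqz.
    assert (Hs : sum_f_R0 (fun m => (- x - t - - x) ^ m / INR (Factorial.fact m) * Derive_n g m (- x)) n
                 = Tay f x n t).
    { unfold Tay. apply sum_eq. intros i _. unfold g.
      rewrite Derive_n_comp_opp by apply Hl.
      rewrite Ropp_involutive.
      replace (- x - t - - x) with (-1 * t) by ring.
      rewrite Rpow_mult_distr.
      assert (Hm : (-1)^i * (-1)^i = 1)
        by (rewrite <- Rpow_mult_distr; replace (-1 * -1) with 1 by ring; apply pow1).
      generalize (INR (Factorial.fact i)); intros F.
      replace ((-1) ^ i * t ^ i / F * ((-1) ^ i * Derive_n f i x)) with
        (((-1)^i * (-1)^i) * (t ^ i / F * Derive_n f i x)) by (unfold Rdiv; ring).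
      rewrite Hm; ring. }
    rewrite Hs in Heqz.
    unfold g in Heqz. rewrite Derive_n_comp_opp in Heqz by apply Hl.
    replace (f (x + t) - Tay f x n t) with
      ((- x - t - - x) ^ S n / INR (Factorial.fact (S n)) * ((-1) ^ S n * Derive_n f (S n) (- z))) by lra.
    replace (- x - t - - x) with (-1 * t) by ring.
    rewrite Rpow_mult_distr.
    rewrite !Rabs_mult. unfold Rdiv. rewrite !Rabs_mult.
    rewrite <- !RPow_abs. rewrite Rabs_m1, pow1.
    rewrite (Rabs_pos_eq (/ _)) by (apply Rlt_le, Rinv_0_lt_compat; lra).
    assert (HD : Rabs (Derive_n f (S n) (- z)) <= Mb).
    { apply HB. revert Ht; unfold Rabs; destruct Rcase_abs; intros; lra. }
    assert (0 <= Rabs t ^ S n) by (apply pow_le, Rabs_pos).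
    assert (0 <= / INR (Factorial.fact (S n))) by (apply Rlt_le, Rinv_0_lt_compat; lra).
    assert (0 <= Rabs t ^ S n * / INR (Factorial.fact (S n))) by (apply Rmult_le_pos; lra).
    assert (Hx: forall a b c d : R, 0 <= a*b -> c <= d -> 1*a*b*(1*c) <= d*b*a) by (intros; nra).
    apply Hx; assumption.
  - subst t. rewrite Tay0, Rplus_0_r, Rminus_diag, Rabs_R0.
    rewrite pow_i by lia. lra.
  - destruct (Taylor_Lagrange f n x (x + t)) as [z [Hz Heqz]].
    { lra. }
    { intros; apply fs. }
    replace (x + t - x) with t in Heqz by ring.
    fold (Tay f x n t) in Heqz.
    replace (f (x + t) - Tay f x n t) with
      (t ^ S n / INR (Factorial.fact (S n)) * Derive_n f (S n) z) by lra.
    unfold Rdiv. rewrite !Rabs_mult.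
    rewrite <- !RPow_abs.
    rewrite (Rabs_pos_eq (/ _)) by (apply Rlt_le, Rinv_0_lt_compat; lra).
    assert (HD : Rabs (Derive_n f (S n) z) <= Mb).
    { apply HB. revert Ht; unfold Rabs; destruct Rcase_abs; intros; lra. }
    assert (0 <= Rabs t ^ S n) by (apply pow_le, Rabs_pos).
    assert (0 <= / INR (Factorial.fact (S n))) by (apply Rlt_le, Rinv_0_lt_compat; lra).
    assert (0 <= Rabs t ^ S n * / INR (Factorial.fact (S n))) by (apply Rmult_le_pos; lra).
    assert (Hx: forall a b c d : R, 0 <= a*b -> c <= d -> a*b*c <= d*b*a) by (intros; nra).
    apply Hx; assumption.
Qed.

Lemma abs5 a b c d e : Rabs (a + b + c + d + e) <= Rabs a + Rabs b + Rabs c + Rabs d + Rabs e.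
Proof.
  pose proof (Rabs_triang (a+b+c+d) e). pose proof (Rabs_triang (a+b+c) d).
  pose proof (Rabs_triang (a+b) c). pose proof (Rabs_triang a b). lra.
Qed.

Lemma cbound c e B : Rabs e <= B -> Rabs (c * e) <= Rabs c * B.
Proof. intros H. rewrite Rabs_mult. apply Rmult_le_compat_l; [apply Rabs_pos|exact H]. Qed.

Lemma fp f (fs : forall (n : nat) (y : R), ex_derive_n f n y) x n :
  exists M, 0 <= M /\ forall h t0 t1 t2 t3 t4 c0 c1 c2 c3 c4 : R,
    0 < h <= 1 -> Rabs t0 <= 3*h -> Rabs t1 <= 3*h -> Rabs t2 <= 3*h ->
    Rabs t3 <= 3*h -> Rabs t4 <= 3*h ->
    exists e, Rabs e <= (Rabs c0 + Rabs c1 + Rabs c2 + Rabs c3 + Rabs c4) * (M * 3 ^ S n) * h ^ S n /\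
      c0 * f (x + t0) + c1 * f (x + t1) + c2 * f (x + t2) + c3 * f (x + t3) + c4 * f (x + t4)
      = c0 * Tay f x n t0 + c1 * Tay f x n t1 + c2 * Tay f x n t2 + c3 * Tay f x n t3
        + c4 * Tay f x n t4 + e.
Proof.
  destruct (taylor_rem f fs x n) as [M [HM HT]].
  exists M. split; [exact HM|].
  intros h t0 t1 t2 t3 t4 c0 c1 c2 c3 c4 Hh H0 H1 H2 H3 H4.
  assert (Hb : forall t, Rabs t <= 3*h -> Rabs (f (x + t) - Tay f x n t) <= M * 3 ^ S n * h ^ S n).
  { intros t Ht. eapply Rle_trans; [apply HT; lra|].
    rewrite Rmult_assoc, <- Rpow_mult_distr. apply Rmult_le_compat_l; [exact HM|].
    apply pow_incr. split; [apply Rabs_pos|exact Ht]. }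
  exists (c0 * (f (x + t0) - Tay f x n t0) + c1 * (f (x + t1) - Tay f x n t1)
          + c2 * (f (x + t2) - Tay f x n t2) + c3 * (f (x + t3) - Tay f x n t3)
          + c4 * (f (x + t4) - Tay f x n t4)).
  split; [|ring].
  eapply Rle_trans; [apply abs5|].
  pose proof (cbound c0 _ _ (Hb t0 H0)). pose proof (cbound c1 _ _ (Hb t1 H1)).
  pose proof (cbound c2 _ _ (Hb t2 H2)). pose proof (cbound c3 _ _ (Hb t3 H3)).
  pose proof (cbound c4 _ _ (Hb t4 H4)).
  assert (E : forall a b c d e B, (a + b + c + d + e) * B = a*B + b*B + c*B + d*B + e*B) by (intros; ring).
  rewrite Rmult_assoc, E. lra.
Qed.


Lemma tb s h r : Rabs s <= 1 -> 0 < h -> -2 <= r <= 2 -> Rabs ((r + s) * h) <= 3 * h.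
Proof.
  intros Hs Hh Hr. rewrite Rabs_mult, (Rabs_pos_eq h) by lra.
  apply Rmult_le_compat_r; [lra|]. revert Hs; unfold Rabs; destruct Rcase_abs; destruct Rcase_abs; intros; lra.
Qed.

Lemma lowsq G a h K : 0 < h -> Rabs (G - a*h) <= K*h^2 -> Rabs K * h <= Rabs a / 2 ->
  a^2/4*h^2 <= G^2.
Proof.
  intros Hh H1 H2.
  pose proof (Rabs_triang_inv (a*h) (a*h - G)) as H3.
  replace (a*h - (a*h - G)) with G in H3 by ring.
  rewrite (Rabs_minus_sym (a*h)) in H3.
  rewrite Rabs_mult, (Rabs_pos_eq h) in H3 by lra.
  assert (K <= Rabs K) by apply Rle_abs.
  assert (0 <= Rabs a) by apply Rabs_pos.
  assert (Rabs a * h / 2 <= Rabs G) by nra.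
  rewrite <- (pow2_abs G), <- (pow2_abs a).
  assert (0 <= Rabs a * h / 2) by nra.
  apply Rle_trans with ((Rabs a * h / 2)^2); [right; field | apply pow_incr; split; lra].
Qed.

Lemma D1eq f x : Derive_n f 1 x / INR (Factorial.fact 1) = Derive f x.
Proof. simpl. unfold Rdiv. rewrite Rinv_1, Rmult_1_r. reflexivity. Qed.

Ltac gen_fact := repeat match goal with |- context [INR (Factorial.fact ?k)] =>
   let F := fresh "F" in generalize (INR (Factorial.fact k)); intro F end;
  repeat match goal with |- context [Derive_n ?f ?k ?x] =>
   let F := fresh "D" in generalize (Derive_n f k x); intro F end.

Ltac combo0 F Hh1 Tm2 Tm1 T0 T1 T2 Hv c0 c1 c2 c3 c4 :=
  let e := fresh "e" in let He := fresh "He" in let Heq := fresh "Heq" in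
  destruct (F _ _ _ _ _ _ c0 c1 c2 c3 c4 Hh1 Tm2 Tm1 T0 T1 T2) as [e [He Heq]];
  match type of Heq with _ = ?P + e =>
    let HP := fresh "HP" in
    assert (HP : @eq R P 0) by (unfold Tay; cbn [sum_f_R0]; gen_fact; unfold Rdiv; ring) end;
  rewrite !Hv;
  match goal with |- Rabs ?X <= _ => replace X with e by lra end;
  exact He.

Ltac comboL f x h F Hh1 Tm2 Tm1 T0 T1 T2 Hv a c0 c1 c2 c3 c4 :=
  let e := fresh "e" in let He := fresh "He" in let Heq := fresh "Heq" in
  destruct (F _ _ _ _ _ _ c0 c1 c2 c3 c4 Hh1 Tm2 Tm1 T0 T1 T2) as [e [He Heq]];
  match type of Heq with _ = ?P + e =>
    let HP := fresh "HP" in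
    assert (HP : @eq R P (a * (Derive_n f 1 x / INR (Factorial.fact 1)) * h))
      by (unfold Tay; cbn [sum_f_R0]; gen_fact; unfold Rdiv; ring);
    rewrite D1eq in HP end;
  rewrite !Hv;
  match goal with |- Rabs ?X <= _ => replace X with e by lra end;
  exact He.

Lemma core f (fs : forall (n : nat) (y : R), ex_derive_n f n y) x
  (fnc : Derive f x <> 0) s (Hs : Rabs s <= 1) :
  exists Kt c eps, 0 < c /\ 0 < eps /\ forall h, 0 < h < eps ->
    forall v : Z -> R, (forall j, v j = f (x + (IZR j + s) * h)) ->
    Rabs (tau5 v) <= Kt * h ^ 5 /\ forall m, (m <= 2)%nat -> c * h ^ 2 <= betaJS m v.
Proof.
  destruct (fp f fs x 0) as [M0 [HM0 F0]].
  destruct (fp f fs x 1) as [M1 [HM1 F1]].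
  destruct (fp f fs x 2) as [M2 [HM2 F2]].
  destruct (fp f fs x 3) as [M3 [HM3 F3]].
  set (KA := (Rabs 1 + Rabs (-2) + Rabs 0 + Rabs 2 + Rabs (-1)) * (M2 * 3 ^ 3)).
  set (KB := (Rabs 1 + Rabs (-2) + Rabs 2 + Rabs (-2) + Rabs 1) * (M1 * 3 ^ 2)).
  set (KC := (Rabs 1 + Rabs (-4) + Rabs 0 + Rabs 4 + Rabs (-1)) * (M0 * 3 ^ 1)).
  set (KD := (Rabs 1 + Rabs (-4) + Rabs 6 + Rabs (-4) + Rabs 1) * (M3 * 3 ^ 4)).
  set (KG0 := (Rabs 1 + Rabs (-4) + Rabs 3 + Rabs 0 + Rabs 0) * (M1 * 3 ^ 2)).
  set (KG1 := (Rabs 0 + Rabs (-1) + Rabs 0 + Rabs 1 + Rabs 0) * (M1 * 3 ^ 2)).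
  set (KG2 := (Rabs 0 + Rabs 0 + Rabs 3 + Rabs (-4) + Rabs 1) * (M1 * 3 ^ 2)).
  set (SG := Rabs KG0 + Rabs KG1 + Rabs KG2 + 1).
  assert (HSG : 0 < SG) by (unfold SG; pose proof (Rabs_pos KG0);
     pose proof (Rabs_pos KG1); pose proof (Rabs_pos KG2); lra).
  assert (HD1 : 0 < Rabs (Derive f x)) by (apply Rabs_pos_lt; exact fnc).
  exists (13/12 * Rabs KA * Rabs KB + 1/4 * Rabs KC * Rabs KD), ((Derive f x) ^ 2 / 4),
    (Rmin 1 (Rabs (Derive f x) / SG)).
  split; [apply Rdiv_lt_0_compat; [|lra]; rewrite <- pow2_abs; apply pow_lt; lra|].
  split.
  { apply Rmin_glb_lt; [lra|]. apply Rdiv_lt_0_compat; lra. }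
  intros h [Hh0 Hh] v Hv.
  assert (Hh1 : 0 < h <= 1) by (pose proof (Rmin_l 1 (Rabs (Derive f x) / SG)); lra).
  assert (HhS : h * SG < Rabs (Derive f x)).
  { pose proof (Rmin_r 1 (Rabs (Derive f x) / SG)). apply Rlt_le_trans with (Rabs (Derive f x) / SG * SG).
    apply Rmult_lt_compat_r; lra. right; field; lra. }
  assert (Tm2 : Rabs ((IZR (-2) + s) * h) <= 3 * h) by (apply tb; lra).
  assert (Tm1 : Rabs ((IZR (-1) + s) * h) <= 3 * h) by (apply tb; lra).
  assert (T0 : Rabs ((IZR 0 + s) * h) <= 3 * h) by (apply tb; lra).
  assert (T1 : Rabs ((IZR 1 + s) * h) <= 3 * h) by (apply tb; lra).
  assert (T2 : Rabs ((IZR 2 + s) * h) <= 3 * h) by (apply tb; lra).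
  assert (HA : Rabs (v (-2)%Z - 2 * v (-1)%Z + 2 * v 1%Z - v 2%Z) <= KA * h ^ 3)
    by combo0 F2 Hh1 Tm2 Tm1 T0 T1 T2 Hv 1 (-2) 0 2 (-1).
  assert (HB : Rabs (v (-2)%Z - 2 * v (-1)%Z + 2 * v 0%Z - 2 * v 1%Z + v 2%Z) <= KB * h ^ 2)
    by combo0 F1 Hh1 Tm2 Tm1 T0 T1 T2 Hv 1 (-2) 2 (-2) 1.
  assert (HC : Rabs (v (-2)%Z - 4 * v (-1)%Z + 4 * v 1%Z - v 2%Z) <= KC * h ^ 1)
    by combo0 F0 Hh1 Tm2 Tm1 T0 T1 T2 Hv 1 (-4) 0 4 (-1).
  assert (HD : Rabs (v (-2)%Z - 4 * v (-1)%Z + 6 * v 0%Z - 4 * v 1%Z + v 2%Z) <= KD * h ^ 4)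
    by combo0 F3 Hh1 Tm2 Tm1 T0 T1 T2 Hv 1 (-4) 6 (-4) 1.
  assert (HG0 : Rabs (v (-2)%Z - 4 * v (-1)%Z + 3 * v 0%Z - (2 * (Derive f x)) * h) <= KG0 * h ^ 2)
    by comboL f x h F1 Hh1 Tm2 Tm1 T0 T1 T2 Hv 2 1 (-4) 3 0 0.
  assert (HG1 : Rabs (- v (-1)%Z + v 1%Z - (2 * (Derive f x)) * h) <= KG1 * h ^ 2)
    by comboL f x h F1 Hh1 Tm2 Tm1 T0 T1 T2 Hv 2 0 (-1) 0 1 0.
  assert (HG2 : Rabs (3 * v 0%Z - 4 * v 1%Z + v 2%Z - (-2 * (Derive f x)) * h) <= KG2 * h ^ 2)
    by comboL f x h F1 Hh1 Tm2 Tm1 T0 T1 T2 Hv (-2) 0 0 3 (-4) 1.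
  assert (HKS : Rabs KG0 * h <= Rabs (Derive f x) /\ Rabs KG1 * h <= Rabs (Derive f x)
                /\ Rabs KG2 * h <= Rabs (Derive f x)).
  { unfold SG in HhS. pose proof (Rabs_pos KG0). pose proof (Rabs_pos KG1).
    pose proof (Rabs_pos KG2). nra. }
  assert (E2 : Rabs (2 * Derive f x) / 2 = Rabs (Derive f x))
    by (rewrite Rabs_mult, (Rabs_pos_eq 2) by lra; field).
  assert (Em2 : Rabs (-2 * Derive f x) / 2 = Rabs (Derive f x))
    by (rewrite Rabs_mult, (Rabs_left (-2)) by lra; field).
  split.
  - unfold tau5.
    assert (E : betaJS 0 v - betaJS 2 v =
      13/12 * (v (-2)%Z - 2 * v (-1)%Z + 2 * v 1%Z - v 2%Z)
            * (v (-2)%Z - 2 * v (-1)%Z + 2 * v 0%Z - 2 * v 1%Z + v 2%Z)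
      + 1/4 * (v (-2)%Z - 4 * v (-1)%Z + 4 * v 1%Z - v 2%Z)
            * (v (-2)%Z - 4 * v (-1)%Z + 6 * v 0%Z - 4 * v 1%Z + v 2%Z))
      by (cbn [betaJS]; unfold Rdiv; ring).
    rewrite E, Rabs_Rabsolu. clear E.
    revert HA HB HC HD.
    generalize (v (-2)%Z - 2 * v (-1)%Z + 2 * v 1%Z - v 2%Z) as A.
    generalize (v (-2)%Z - 2 * v (-1)%Z + 2 * v 0%Z - 2 * v 1%Z + v 2%Z) as B.
    generalize (v (-2)%Z - 4 * v (-1)%Z + 4 * v 1%Z - v 2%Z) as Cc.
    generalize (v (-2)%Z - 4 * v (-1)%Z + 6 * v 0%Z - 4 * v 1%Z + v 2%Z) as D.
    intros D Cc B A HA HB HC HD.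
    assert (HA' : Rabs A <= Rabs KA * h ^ 3).
    { eapply Rle_trans; [exact HA|]. apply Rmult_le_compat_r; [apply pow_le; lra|apply Rle_abs]. }
    assert (HB' : Rabs B <= Rabs KB * h ^ 2).
    { eapply Rle_trans; [exact HB|]. apply Rmult_le_compat_r; [apply pow_le; lra|apply Rle_abs]. }
    assert (HC' : Rabs Cc <= Rabs KC * h ^ 1).
    { eapply Rle_trans; [exact HC|]. apply Rmult_le_compat_r; [apply pow_le; lra|apply Rle_abs]. }
    assert (HD' : Rabs D <= Rabs KD * h ^ 4).
    { eapply Rle_trans; [exact HD|]. apply Rmult_le_compat_r; [apply pow_le; lra|apply Rle_abs]. }
    assert (P1 : Rabs A * Rabs B <= (Rabs KA * h ^ 3) * (Rabs KB * h ^ 2))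
      by (apply Rmult_le_compat; try apply Rabs_pos; assumption).
    assert (P2 : Rabs Cc * Rabs D <= (Rabs KC * h ^ 1) * (Rabs KD * h ^ 4))
      by (apply Rmult_le_compat; try apply Rabs_pos; assumption).
    apply Rle_trans with (Rabs (13/12*A*B) + Rabs (1/4*Cc*D)); [apply Rabs_triang|].
    rewrite !Rabs_mult, (Rabs_pos_eq (13/12)), (Rabs_pos_eq (1/4)) by lra.
    assert (Q1 : (Rabs KA * h ^ 3) * (Rabs KB * h ^ 2) = Rabs KA * Rabs KB * h ^ 5) by ring.
    assert (Q2 : (Rabs KC * h ^ 1) * (Rabs KD * h ^ 4) = Rabs KC * Rabs KD * h ^ 5) by ring.
    rewrite Q1 in P1. rewrite Q2 in P2.
    assert (Q3 : (13 / 12 * Rabs KA * Rabs KB + 1 / 4 * Rabs KC * Rabs KD) * h ^ 5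
       = 13/12 * (Rabs KA * Rabs KB * h ^ 5) + 1/4 * (Rabs KC * Rabs KD * h ^ 5)) by ring.
    rewrite Q3.
    assert (Q4 : 13 / 12 * Rabs A * Rabs B + 1 / 4 * Rabs Cc * Rabs D
       = 13/12 * (Rabs A * Rabs B) + 1/4 * (Rabs Cc * Rabs D)) by ring.
    rewrite Q4. lra.
  - intros m Hm. destruct m as [|[|[|m]]]; [| | | lia]; cbn [betaJS].
    + pose proof (lowsq _ _ h KG0 Hh0 HG0 ltac:(lra)) as L.
      pose proof (pow2_ge_0 (v (-2)%Z - 2 * v (-1)%Z + v 0%Z)). nra.
    + pose proof (lowsq _ _ h KG1 Hh0 HG1 ltac:(lra)) as L.
      pose proof (pow2_ge_0 (v (-1)%Z - 2 * v 0%Z + v 1%Z)). nra.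
    + pose proof (lowsq _ _ h KG2 Hh0 HG2 ltac:(lra)) as L.
      pose proof (pow2_ge_0 (v 0%Z - 2 * v 1%Z + v 2%Z)). nra.
Qed.

Lemma omega_alg v s K h :
  (forall m, (m <= 2)%nat -> Rabs (tau5 v / (betaJS m v * s m)) <= K * h ^ 3) ->
  forall m, (m <= 2)%nat -> Rabs (omegaDS v s m - dlin m) <= 2 * K ^ 2 * h ^ 6.
Proof.
  intros Hr m Hm.
  assert (Q : forall l, (l <= 2)%nat ->
            0 <= (tau5 v / (betaJS l v * s l)) ^ 2 <= K ^ 2 * h ^ 6).
  { intros l Hl. specialize (Hr l Hl). split; [apply pow2_ge_0|].
    rewrite <- pow2_abs. replace (K ^ 2 * h ^ 6) with ((K * h ^ 3) ^ 2) by ring.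
    apply pow_incr; split; [apply Rabs_pos|exact Hr]. }
  pose proof (Q 0%nat ltac:(lia)) as Q0. pose proof (Q 1%nat ltac:(lia)) as Q1.
  pose proof (Q 2%nat ltac:(lia)) as Q2. clear Q Hr.
  set (B := K ^ 2 * h ^ 6) in *.
  replace (2 * K ^ 2 * h ^ 6) with (2 * B) by (unfold B; ring).
  destruct m as [|[|[|m]]]; [| | | lia].
  all: revert Q0 Q1 Q2; unfold omegaDS, alphaDS;
  generalize ((tau5 v / (betaJS 0 v * s 0%nat)) ^ 2) as q0;
  generalize ((tau5 v / (betaJS 1 v * s 1%nat)) ^ 2) as q1;
  generalize ((tau5 v / (betaJS 2 v * s 2%nat)) ^ 2) as q2;
  intros q2 q1 q0 Q0 Q1 Q2; cbn [dlin].
  all: set (Sd := 1 / 10 * (1 + q0) + 6 / 10 * (1 + q1) + 3 / 10 * (1 + q2)).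
  all: assert (HS : 1 <= Sd) by (unfold Sd; lra).
  all: assert (Gen : forall N d, Rabs (N - d * Sd) <= 2 * B -> Rabs (N / Sd - d) <= 2 * B) by
   (intros N d H; replace (N / Sd - d) with ((N - d * Sd) / Sd) by (field; lra);
    rewrite Rabs_div by lra; rewrite (Rabs_pos_eq Sd) by lra;
    apply Rle_div_l; [lra|]; nra).
  all: apply Gen; unfold Sd; unfold Rabs; destruct Rcase_abs; lra.
Qed.

Lemma stencil_result f (fs : forall (n : nat) (y : R), ex_derive_n f n y) x
  (fnc : Derive f x <> 0) (delta : nat -> R -> R) (Phi : R -> R) (C kappa : R)
  (kappa_pos : 0 < kappa)
  (H1 : forall h, 0 < h -> delta 1%nat h = Phi h)
  (H0 : bigO0 (fun h => delta 0%nat h - Phi h) 1)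
  (H2 : bigO0 (fun h => delta 2%nat h - Phi h) 1)
  (HP : forall h, 0 < h -> Phi h + C > kappa)
  s (Hs : Rabs s <= 1) (st : R -> Z -> R)
  (Hst : forall h j, st h j = f (x + (IZR j + s) * h)) m (Hm : (m <= 2)%nat) :
  bigO0 (fun h => omegaDS (st h) (fun l => delta l h + C) m - dlin m) 6.
Proof.
  destruct (core f fs x fnc s Hs) as [Kt [c [eps [Hc [Heps Hcore]]]]].
  destruct H0 as [K0 [e0 [He0 HK0]]]. destruct H2 as [K2 [e2 [He2 HK2]]].
  set (K := 2 * Rabs Kt / (c * kappa)).
  assert (HK0p : 0 < 2 * (Rabs K0 + 1)) by (pose proof (Rabs_pos K0); lra).
  assert (HK2p : 0 < 2 * (Rabs K2 + 1)) by (pose proof (Rabs_pos K2); lra).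
  exists (2 * K ^ 2), (Rmin (Rmin eps e0) (Rmin e2 (Rmin (kappa / (2 * (Rabs K0 + 1)))
                                                    (kappa / (2 * (Rabs K2 + 1)))))).
  split.
  { repeat apply Rmin_glb_lt; try assumption; apply Rdiv_lt_0_compat; lra. }
  intros h [Hh0 Hh].
  pose proof (Rmin_l (Rmin eps e0) (Rmin e2 (Rmin (kappa / (2 * (Rabs K0 + 1)))
                                                    (kappa / (2 * (Rabs K2 + 1)))))).
  pose proof (Rmin_r (Rmin eps e0) (Rmin e2 (Rmin (kappa / (2 * (Rabs K0 + 1)))
                                                    (kappa / (2 * (Rabs K2 + 1)))))).
  pose proof (Rmin_l eps e0). pose proof (Rmin_r eps e0).
  pose proof (Rmin_l e2 (Rmin (kappa / (2 * (Rabs K0 + 1))) (kappa / (2 * (Rabs K2 + 1))))).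
  pose proof (Rmin_r e2 (Rmin (kappa / (2 * (Rabs K0 + 1))) (kappa / (2 * (Rabs K2 + 1))))).
  pose proof (Rmin_l (kappa / (2 * (Rabs K0 + 1))) (kappa / (2 * (Rabs K2 + 1)))).
  pose proof (Rmin_r (kappa / (2 * (Rabs K0 + 1))) (kappa / (2 * (Rabs K2 + 1)))).
  assert (hk0 : h * (2 * (Rabs K0 + 1)) <= kappa).
  { apply Rle_trans with (kappa / (2 * (Rabs K0 + 1)) * (2 * (Rabs K0 + 1))).
    apply Rmult_le_compat_r; lra. right; field; lra. }
  assert (hk2 : h * (2 * (Rabs K2 + 1)) <= kappa).
  { apply Rle_trans with (kappa / (2 * (Rabs K2 + 1)) * (2 * (Rabs K2 + 1))).
    apply Rmult_le_compat_r; lra. right; field; lra. }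
  destruct (Hcore h ltac:(lra) (st h) (Hst h)) as [Ht Hb].
  assert (Hsl : forall l, (l <= 2)%nat -> kappa / 2 <= delta l h + C).
  { intros l Hl. pose proof (HP h Hh0).
    destruct l as [|[|[|l]]]; [| | | lia].
    - specialize (HK0 h ltac:(lra)). rewrite pow_1 in HK0.
      pose proof (Rle_abs K0). pose proof (Rabs_pos K0).
      revert HK0; unfold Rabs at 1; destruct Rcase_abs; intros; nra.
    - rewrite H1 by lra. lra.
    - specialize (HK2 h ltac:(lra)). rewrite pow_1 in HK2.
      pose proof (Rle_abs K2). pose proof (Rabs_pos K2).
      revert HK2; unfold Rabs at 1; destruct Rcase_abs; intros; nra. }
  cbv beta.
  apply omega_alg; [|exact Hm].
  intros l Hl.
  pose proof (Hb l Hl) as Hbl. pose proof (Hsl l Hl) as Hsl'.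
  assert (Hh2 : 0 < h ^ 2) by (apply pow_lt; lra).
  assert (Hlow : c * h ^ 2 * (kappa / 2) <= betaJS l (st h) * (delta l h + C)).
  { apply Rmult_le_compat; try lra. apply Rmult_le_pos; lra. }
  assert (Hpos : 0 < c * h ^ 2 * (kappa / 2)).
  { apply Rmult_lt_0_compat; [apply Rmult_lt_0_compat|]; lra. }
  rewrite Rabs_div by lra.
  rewrite (Rabs_pos_eq (betaJS l (st h) * (delta l h + C))) by lra.
  apply Rle_div_l; [lra|].
  assert (HK : 0 <= K) by (unfold K; apply Rmult_le_pos;
     [pose proof (Rabs_pos Kt); lra | apply Rlt_le, Rinv_0_lt_compat, Rmult_lt_0_compat; lra]).
  assert (Hh3 : 0 <= K * h ^ 3) by (apply Rmult_le_pos; [lra | apply pow_le; lra]).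
  assert (E : K * h ^ 3 * (c * h ^ 2 * (kappa / 2)) = Rabs Kt * h ^ 5)
    by (unfold K; field; lra).
  assert (Ht' : Rabs (tau5 (st h)) <= Rabs Kt * h ^ 5).
  { eapply Rle_trans; [exact Ht|]. apply Rmult_le_compat_r; [apply pow_le; lra|apply Rle_abs]. }
  apply Rle_trans with (K * h ^ 3 * (c * h ^ 2 * (kappa / 2))); [lra|].
  apply Rmult_le_compat_l; lra.
Qed.

Theorem mainTheorem1
  (f : R -> R) (x : R)
  (f_smooth : forall (n : nat) (y : R), ex_derive_n f n y)
  (f_noncrit : Derive f x <> 0)
  (delta : nat -> R -> R) (Phi : R -> R) (C kappa : R)
  (kappa_pos : 0 < kappa)
  (H1 : forall h, 0 < h -> delta 1%nat h = Phi h)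
  (H0 : bigO0 (fun h => delta 0%nat h - Phi h) 1)
  (H2 : bigO0 (fun h => delta 2%nat h - Phi h) 1)
  (HP : forall h, 0 < h -> Phi h + C > kappa)
  (HPbd : bigO0 (fun h => Phi h + C) 0) :
  forall m : nat, (m <= 2)%nat ->
    bigO0 (fun h => omegaDS (stencil_plus f x h) (fun l => delta l h + C) m
                    - dlin m) 6 /\
    bigO0 (fun h => omegaDS (stencil_minus f x h) (fun l => delta l h + C) m
                    - dlin m) 6.
Proof.
  intros m Hm. split.
  - assert (Hs : Rabs 0 <= 1) by (rewrite Rabs_R0; lra).
    assert (Hst : forall h j, stencil_plus f x h j = f (x + (IZR j + 0) * h)).
    { intros h j. unfold stencil_plus. rewrite Rplus_0_r. reflexivity. }
    exact (stencil_result f f_smooth x f_noncrit delta Phi C kappa kappa_pos H1 H0 H2 HP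
             0 Hs (stencil_plus f x) Hst m Hm).
  - assert (Hs : Rabs (-1) <= 1) by (unfold Rabs; destruct Rcase_abs; lra).
    assert (Hst : forall h j, stencil_minus f x h j = f (x + (IZR j + -1) * h)).
    { intros h j. unfold stencil_minus. replace (IZR j + -1) with (IZR (j - 1)) by (rewrite minus_IZR; ring). reflexivity. }
    exact (stencil_result f f_smooth x f_noncrit delta Phi C kappa kappa_pos H1 H0 H2 HP
             (-1) Hs (stencil_minus f x) Hst m Hm).
Qed.
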